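(* There exist a compact metric space $X$ and a flow $\phi$ on $X$ which has the shadowing property, is singular-expansive and singular-equicontinuous, but is not equicontinuous.
   Context: A flow is a continuous $\phi:\mathbb{R}\times X\to X$ with $\phi_0=\mathrm{id}$, $\phi_{t+s}=\phi_t\circ\phi_s$; $\phi_I(x)=\{\phi_t(x):t\in I\}$; $Sing(\phi)$ is the set of fixed points; $dist(z,A)=\inf_{a\in A}d(z,a)$ (with $dist(z,\emptyset)=diam(X)$). Singular-expansive: for every $\epsilon>0$ there is $\delta>0$ such that whenever $x,y\in X$ and an increasing homeomorphism $s:\mathbb{R}\to\mathbb{R}$ satisfy $d(\phi_t(x),\phi_{s(t)}(y))\le\delta\,dist(\phi_t(x),Sing(\phi))$ for all $t$, then $\phi_{s(t_0)}(y)\in\phi_{[t_0-\epsilon,t_0+\epsilon]}(x)$ for some $t_0$. Equicontinuous: for every $\epsilon>0$ there is $\delta>0$ such that $d(x,y)\le\delta$ implies $d(\phi_t(x),\phi_t(y))\le\epsilon$ for all $t\in\mathbb{R}$. Singular-equicontinuous: for every $\epsilon>0$ there is $\delta>0$ such that $d(x,y)\le\delta\,dist(x,Sing(\phi))$ implies $d(\phi_t(x),\phi_t(y))\le\epsilon$ for all $t\in\mathbb{R}$. Shadowing property: for $\delta,T>0$ a $(\delta,T)$-pseudo orbit is a sequence $(x_i,t_i)_{i\in\mathbb{Z}}$ with $x_i\in X$, $t_i\ge T$, $d(\phi_{t_i}(x_i),x_{i+1})\le\delta$. Let $Rep(\epsilon)$ be the set of increasing homeomorphisms $s:\mathbb{R}\to\mathbb{R}$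 with $|\frac{s(t)-s(r)}{t-r}-1|\le\epsilon$ for all $t\ne r$. Set $S(0)=0$, $S(i)=t_0+\dots+t_{i-1}$ for $i>0$, $S(i)=-t_{-1}-\dots-t_{i}$ for $i<0$. The pseudo orbit is $\epsilon$-shadowed if there are $x\in X$ and $s\in Rep(\epsilon)$ with $d(\phi_{s(t)}(x),\phi_{t-S(i)}(x_i))\le\epsilon$ for all $i\in\mathbb{Z}$ and $S(i)\le t<S(i+1)$. $\phi$ has the shadowing property if for every $\epsilon>0$ there is $\delta>0$ such that every $(\delta,1)$-pseudo orbit can be $\epsilon$-shadowed. *)

(* Defs.v *)
From Stdlib Require Import Reals Lra ZArith List Classical ClassicalEpsilon.
From Coquelicot Require Import Coquelicot.
Open Scope R_scope.

Section Flows.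
Variables (X : Type) (d : X -> X -> R).

Definition is_metric : Prop :=
  (forall x y, 0 <= d x y) /\ (forall x y, d x y = 0 <-> x = y) /\
  (forall x y, d x y = d y x) /\ (forall x y z, d x z <= d x y + d y z).

Definition mopen (U : X -> Prop) : Prop :=
  forall x, U x -> exists r, 0 < r /\ forall y, d x y < r -> U y.

Definition mcompact : Prop :=
  forall (I : Type) (U : I -> X -> Prop), (forall i, mopen (U i)) ->
    (forall x, exists i, U i x) ->
    exists l : list I, forall x, exists i, In i l /\ U i x.

Definition is_flow (phi : R -> X -> X) : Prop :=
  (forall t x eps, 0 < eps -> exists del, 0 < del /\
     forall s y, Rabs (s - t) < del -> d x y < del -> d (phi s y) (phi t x) < eps) /\
  (forall x, phi 0 x = x) /\
  (forall t s x, phi (t + s) x = phi t (phi s x)).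

Definition Sing (phi : R -> X -> X) (x : X) : Prop := forall t, phi t x = x.

Definition diam : R := real (Lub_Rbar (fun r => exists x y, r = d x y)).

Definition dist (z : X) (A : X -> Prop) : R :=
  if excluded_middle_informative (exists a, A a)
  then real (Glb_Rbar (fun r => exists a, A a /\ r = d z a))
  else diam.

End Flows.
Arguments is_metric {X}. Arguments mcompact {X}. Arguments is_flow {X}.
Arguments Sing {X}. Arguments diam {X}. Arguments dist {X}.

Definition inc_homeo (s : R -> R) : Prop :=
  (forall a b, a < b -> s a < s b) /\ continuity s /\
  exists g : R -> R, (forall t, g (s t) = t) /\ (forall t, s (g t) = t) /\ continuity g.

Definition sing_expansive {X : Type} (d : X -> X -> R) (phi : R -> X -> X) : Prop :=
  forall eps, 0 < eps -> exists del, 0 < del /\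
    forall x y (s : R -> R), inc_homeo s ->
      (forall t, d (phi t x) (phi (s t) y) <= del * dist d (phi t x) (Sing phi)) ->
      exists t0 u, t0 - eps <= u <= t0 + eps /\ phi (s t0) y = phi u x.

Definition equicontinuous {X : Type} (d : X -> X -> R) (phi : R -> X -> X) : Prop :=
  forall eps, 0 < eps -> exists del, 0 < del /\
    forall x y, d x y <= del -> forall t, d (phi t x) (phi t y) <= eps.

Definition sing_equicontinuous {X : Type} (d : X -> X -> R) (phi : R -> X -> X) : Prop :=
  forall eps, 0 < eps -> exists del, 0 < del /\
    forall x y, d x y <= del * dist d x (Sing phi) -> forall t, d (phi t x) (phi t y) <= eps.

Fixpoint sumN (f : nat -> R) (k : nat) : R :=
  match k with O => 0 | S k => sumN f k + f k end.

(* S(0)=0, S(i)=t_0+...+t_{i-1} (i>0), S(i)= -t_{-1}-...-t_i (i<0) *)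
Definition Ssum (ts : Z -> R) (i : Z) : R :=
  if Z.leb 0 i then sumN (fun n => ts (Z.of_nat n)) (Z.to_nat i)
  else - sumN (fun n => ts (i + Z.of_nat n)%Z) (Z.to_nat (- i)).

Definition pseudo_orbit {X : Type} (d : X -> X -> R) (phi : R -> X -> X)
  (del T : R) (xs : Z -> X) (ts : Z -> R) : Prop :=
  forall i, T <= ts i /\ d (phi (ts i) (xs i)) (xs (i + 1)%Z) <= del.

Definition Rep (eps : R) (s : R -> R) : Prop :=
  inc_homeo s /\ forall t r, t <> r -> Rabs ((s t - s r) / (t - r) - 1) <= eps.

Definition shadowed {X : Type} (d : X -> X -> R) (phi : R -> X -> X)
  (eps : R) (xs : Z -> X) (ts : Z -> R) : Prop :=
  exists x s, Rep eps s /\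
    forall i t, Ssum ts i <= t < Ssum ts (i + 1) ->
      d (phi (s t) x) (phi (t - Ssum ts i) (xs i)) <= eps.

Definition shadowing {X : Type} (d : X -> X -> R) (phi : R -> X -> X) : Prop :=
  forall eps, 0 < eps -> exists del, 0 < del /\
    forall xs ts, pseudo_orbit d phi del 1 xs ts -> shadowed d phi eps xs ts.

(* Main.v *)
Require Import Defs.
From Stdlib Require Import Reals Lra Lia Psatz ZArith List Classical ClassicalEpsilon.
From Coquelicot Require Import Coquelicot.
Open Scope R_scope.


Definition Dn (t x : R) := 1 - x + x * exp t.
Definition F (t x : R) := x * exp t / Dn t x.

Lemma exp1_ge2 : 2 <= exp 1.
Proof. pose proof (exp_ineq1_le 1). lra. Qed.

Lemma Dn_ge t x : 0 <= x <= 1 -> Rmin 1 (exp t) <= Dn t x.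
Proof.
  intros Hx. unfold Dn. pose proof (exp_pos t).
  unfold Rmin; destruct (Rle_dec 1 (exp t)); nra.
Qed.

Lemma Dn_pos t x : 0 <= x <= 1 -> 0 < Dn t x.
Proof.
  intros Hx. pose proof (Dn_ge t x Hx). pose proof (exp_pos t).
  unfold Rmin in H; destruct (Rle_dec 1 (exp t)); lra.
Qed.

Lemma F_range t x : 0 <= x <= 1 -> 0 <= F t x <= 1.
Proof.
  intros Hx. pose proof (Dn_pos t x Hx). pose proof (exp_pos t).
  unfold F. split.
  - unfold Rdiv; apply Rmult_le_pos; [nra| left; apply Rinv_0_lt_compat; lra].
  - apply Rmult_le_reg_r with (Dn t x); auto. unfold Rdiv.
    rewrite Rmult_assoc, Rinv_l by lra. unfold Dn. nra.
Qed.

Lemma F_0 x : F 0 x = x.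
Proof. unfold F, Dn. rewrite exp_0. field_simplify. reflexivity. lra. Qed.

Lemma F_add t s x : 0 <= x <= 1 -> F (t + s) x = F t (F s x).
Proof.
  intros Hx. pose proof (Dn_pos s x Hx) as H1.
  pose proof (Dn_pos (t+s) x Hx) as H2.
  unfold F at 1. unfold F at 2. unfold Dn in *. rewrite exp_plus in *.
  unfold F, Dn. field. split; nra.
Qed.

Lemma F_diff h y : 0 <= y <= 1 -> F h y - y = y * (1 - y) * (exp h - 1) / Dn h y.
Proof. intros Hy. pose proof (Dn_pos h y Hy). unfold F, Dn in *. field. lra. Qed.

Lemma F_diffx t x y : 0 <= x <= 1 -> 0 <= y <= 1 ->
  F t y - F t x = exp t * (y - x) / (Dn t y * Dn t x).
Proof.
  intros Hx Hy. pose proof (Dn_pos t x Hx). pose proof (Dn_pos t y Hy).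
  unfold F, Dn in *. field. split; lra.
Qed.

Lemma exp_ge1 s : 0 <= s -> 1 <= exp s.
Proof. intros. pose proof (exp_ineq1_le s). lra. Qed.

Lemma exp_le1 s : s <= 0 -> exp s <= 1.
Proof. intros. rewrite <- exp_0. destruct (Req_dec s 0). subst; lra.
  left. apply exp_increasing. lra. Qed.

Lemma F_ge s y : 0 <= y <= 1 -> 0 <= s -> y <= F s y.
Proof.
  intros Hy Hs. pose proof (F_diff s y Hy). pose proof (Dn_pos s y Hy).
  pose proof (exp_ge1 s Hs).
  assert (0 <= y * (1 - y) * (exp s - 1) / Dn s y).
  { unfold Rdiv. apply Rmult_le_pos; [|left; apply Rinv_0_lt_compat; lra].
    apply Rmult_le_pos; nra. }
  lra.
Qed.

Lemma F_mono_x t x y : 0 <= x <= 1 -> 0 <= y <= 1 -> x <= y -> F t x <= F t y.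
Proof.
  intros Hx Hy Hxy. pose proof (F_diffx t x y Hx Hy).
  pose proof (Dn_pos t x Hx). pose proof (Dn_pos t y Hy). pose proof (exp_pos t).
  assert (0 <= exp t * (y - x) / (Dn t y * Dn t x)).
  { unfold Rdiv. apply Rmult_le_pos; [nra|left; apply Rinv_0_lt_compat; nra]. }
  lra.
Qed.

Lemma F_mono_t s t y : 0 <= y <= 1 -> s <= t -> F s y <= F t y.
Proof.
  intros Hy Hst. replace t with ((t - s) + s) by ring.
  rewrite F_add by auto. apply F_ge. apply F_range; auto. lra.
Qed.

Lemma F_fix0 t : F t 0 = 0.
Proof. unfold F, Dn. field_simplify; [reflexivity|lra..]. Qed.

Lemma F_fix1 t : F t 1 = 1.
Proof. unfold F, Dn. pose proof (exp_pos t). field. lra. Qed.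

Lemma F_comm a b y : 0 <= y <= 1 -> F a (F b y) = F b (F a y).
Proof. intros. rewrite <- !F_add by auto. f_equal; ring. Qed.

Lemma F_inv h y : 0 <= y <= 1 -> F (-h) (F h y) = y.
Proof. intros. rewrite <- F_add by auto. replace (-h+h) with 0 by ring. apply F_0. Qed.

Lemma exp_small h : 0 <= h <= 1/2 -> exp h - 1 <= 2 * h.
Proof.
  intros Hh. pose proof (exp_ineq1_le (-h)).
  assert (exp h * exp (-h) = 1) by (rewrite <- exp_plus; replace (h + -h) with 0 by ring; apply exp_0).
  pose proof (exp_pos h). nra.
Qed.

Lemma F_near_pos h y : 0 <= y <= 1 -> 0 <= h <= 1/2 -> 0 <= F h y - y <= h / 2.
Proof.
  intros Hy Hh. rewrite F_diff by auto. pose proof (exp_ge1 h (proj1 Hh)).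
  pose proof (exp_small h Hh). pose proof (Dn_pos h y Hy).
  assert (1 <= Dn h y) by (unfold Dn; nra).
  split.
  - unfold Rdiv. apply Rmult_le_pos; [|left; apply Rinv_0_lt_compat; lra]. apply Rmult_le_pos; nra.
  - apply Rle_trans with (y * (1 - y) * (exp h - 1)).
    + unfold Rdiv. rewrite <- (Rmult_1_r (y * (1 - y) * (exp h - 1))) at 2.
      apply Rmult_le_compat_l; [apply Rmult_le_pos; nra|].
      rewrite <- Rinv_1. apply Rinv_le_contravar; lra.
    + assert (0 <= y*(1-y)) by nra. assert (y*(1-y) <= 1/4) by (pose proof (pow2_ge_0 (y - 1/2)); nra).
      apply Rle_trans with (1/4 * (exp h - 1)). apply Rmult_le_compat_r; lra. lra.
Qed.

Lemma F_near h y : 0 <= y <= 1 -> Rabs h <= 1/2 -> Rabs (F h y - y) <= Rabs h / 2.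
Proof.
  intros Hy Hh. destruct (Rle_dec 0 h).
  - rewrite (Rabs_pos_eq h) in * by lra. pose proof (F_near_pos h y Hy (conj r Hh)).
    rewrite Rabs_pos_eq; lra.
  - rewrite (Rabs_left h) in * by lra.
    pose proof (F_range h y Hy) as Hr.
    pose proof (F_near_pos (-h) (F h y) Hr ltac:(lra)).
    rewrite F_inv in H by auto. rewrite Rabs_left1; lra.
Qed.

Lemma ln_le_x1 x : 0 < x -> ln x <= x - 1.
Proof. intros. pose proof (exp_ineq1_le (ln x)). rewrite exp_ln in H0; lra. Qed.

Lemma ln_lip r p q : 0 < r -> r <= p -> r <= q -> Rabs (ln p - ln q) <= Rabs (p - q) / r.
Proof.
  intros Hr Hp Hq.
  assert (forall a b, r <= a -> r <= b -> ln a - ln b <= Rabs (a - b) / r).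
  { intros a b Ha Hb. replace (ln a - ln b) with (ln (a / b)).
    2:{ unfold Rdiv. rewrite ln_mult, ln_Rinv; try lra. apply Rinv_0_lt_compat; lra. }
    eapply Rle_trans. apply ln_le_x1. apply Rdiv_lt_0_compat; lra.
    replace (a / b - 1) with ((a - b) / b) by (field; lra).
    destruct (Rle_dec 0 (a - b)).
    - rewrite Rabs_pos_eq by lra. unfold Rdiv. apply Rmult_le_compat_l; auto.
      apply Rinv_le_contravar; lra.
    - apply Rle_trans with 0.
      + unfold Rdiv. assert (0 < / b) by (apply Rinv_0_lt_compat; lra). nra.
      + unfold Rdiv. apply Rmult_le_pos. apply Rabs_pos. left; apply Rinv_0_lt_compat; lra. }
  unfold Rabs at 1. destruct (Rcase_abs (ln p - ln q)).
  - replace (- (ln p - ln q)) with (ln q - ln p) by ring. rewrite Rabs_minus_sym. auto.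
  - auto.
Qed.

Lemma F_solve r p q : 0 < r -> r <= p <= 1 - r -> r <= q <= 1 - r ->
  exists g, F g q = p /\ Rabs g <= 2 * Rabs (p - q) / r.
Proof.
  intros Hr Hp Hq.
  exists (ln p + ln (1 - q) + - ln q + - ln (1 - p)). split.
  - unfold F, Dn. rewrite !exp_plus, !exp_Ropp, !exp_ln by lra. field.
    repeat split; try lra.
  - pose proof (ln_lip r p q Hr ltac:(lra) ltac:(lra)).
    pose proof (ln_lip r (1-q) (1-p) Hr ltac:(lra) ltac:(lra)).
    replace (1 - q - (1 - p)) with (p - q) in H0 by ring.
    replace (ln p + ln (1 - q) + - ln q + - ln (1 - p)) with
      ((ln p - ln q) + (ln (1 - q) - ln (1 - p))) by ring.
    eapply Rle_trans. apply Rabs_triang. lra.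
Qed.

Lemma F_disp r t x : 0 < r <= 1/2 -> r <= x <= 1 - r -> 1 <= t -> x + r / 4 <= F t x.
Proof.
  intros Hr Hx Ht.
  assert (Hx' : 0 <= x <= 1) by lra.
  apply Rle_trans with (F 1 x); [|apply F_mono_t; auto].
  pose proof (F_diff 1 x Hx'). pose proof (Dn_pos 1 x Hx'). pose proof exp1_ge2.
  assert (Dn 1 x <= exp 1) by (unfold Dn; nra).
  assert (r / 2 <= x * (1 - x)) by nra.
  assert (x * (1 - x) * (exp 1 - 1) / Dn 1 x >= x * (1 - x) * (exp 1 - 1) / exp 1).
  { unfold Rdiv. apply Rle_ge. apply Rmult_le_compat_l. nra.
    apply Rinv_le_contravar; lra. }
  assert (x * (1 - x) * (exp 1 - 1) / exp 1 >= x * (1-x) / 2).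
  { apply Rle_ge. apply Rmult_le_reg_r with (exp 1). lra.
    replace (x * (1 - x) * (exp 1 - 1) / exp 1 * exp 1) with (x * (1 - x) * (exp 1 - 1)) by (field; lra).
    nra. }
  lra.
Qed.

Lemma Rabs_le_inv a b : Rabs a <= b -> - b <= a <= b.
Proof. unfold Rabs; destruct (Rcase_abs a); intros; lra. Qed.


Lemma sumN_shift f k : sumN f (S k) = f 0%nat + sumN (fun n => f (S n)) k.
Proof. induction k; simpl in *. ring. rewrite IHk. ring. Qed.

Lemma Ssum_succ ts i : Ssum ts (i + 1) = Ssum ts i + ts i.
Proof.
  unfold Ssum. destruct (Z.leb_spec 0 i).
  - destruct (Z.leb_spec 0 (i+1)); [|lia].
    replace (Z.to_nat (i + 1)) with (S (Z.to_nat i)) by lia. simpl.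
    rewrite Z2Nat.id by lia. reflexivity.
  - destruct (Z.eq_dec i (-1)).
    + subst. simpl. ring.
    + destruct (Z.leb_spec 0 (i+1)); [lia|].
      replace (Z.to_nat (- i)) with (S (Z.to_nat (- (i + 1)))) by lia.
      rewrite sumN_shift. cbv beta. change (Z.of_nat 0) with 0%Z. rewrite Z.add_0_r.
      assert (forall n, (i + Z.of_nat (S n))%Z = (i + 1 + Z.of_nat n)%Z) by (intros; lia).
      assert (sumN (fun n : nat => ts (i + Z.of_nat (S n))%Z) (Z.to_nat (- (i + 1))) =
              sumN (fun n : nat => ts (i + 1 + Z.of_nat n)%Z) (Z.to_nat (- (i + 1)))).
      { induction (Z.to_nat (- (i + 1))) as [|m IHm]; [reflexivity|]. cbn [sumN]. rewrite IHm, H1. reflexivity. }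
      rewrite H2. ring.
Qed.

Lemma Ssum_mono ts i j : (forall k, 0 <= ts k) -> (i <= j)%Z -> Ssum ts i <= Ssum ts j.
Proof.
  intros Hts Hij. replace j with (i + Z.of_nat (Z.to_nat (j - i)))%Z by lia.
  induction (Z.to_nat (j - i)).
  - rewrite Z.add_0_r. lra.
  - replace (i + Z.of_nat (S n))%Z with (i + Z.of_nat n + 1)%Z by lia.
    rewrite Ssum_succ. specialize (Hts (i + Z.of_nat n)%Z). lra.
Qed.


Definition PO (b del : R) (p ts : Z -> R) : Prop :=
  (0 < b <= 1/8) /\ (0 < del <= b*b*b/100) /\ (forall i, 0 <= p i <= 1) /\
  (forall i, 1 <= ts i /\ Rabs (F (ts i) (p i) - p (i+1)%Z) <= del).

Lemma PO_facts b del p ts : PO b del p ts ->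
  del <= b / 64 /\ forall i, 0 <= p i <= 1 /\ 1 <= ts i /\
     p (i+1)%Z - del <= F (ts i) (p i) <= p (i+1)%Z + del /\ 0 <= F (ts i) (p i) <= 1.
Proof.
  intros (Hb & Hd & Hp & Hts). split.
  - assert (b*b*b <= b * (1/64)) by (assert (b*b <= 1/64) by nra; nra). lra.
  - intros i. destruct (Hts i) as [H1 H2]. apply Rabs_le_inv in H2.
    pose proof (F_range (ts i) (p i) (Hp i)). repeat split; try lra; apply Hp.
Qed.

Lemma up_closed b del p ts i : PO b del p ts -> b <= p i -> b <= p (i+1)%Z.
Proof.
  intros HP Hi. pose proof HP as (Hb & Hd & _).
  destruct (PO_facts _ _ _ _ HP) as [Hdb Hf]. destruct (Hf i) as (Hp & Ht & HF & _).
  destruct (Rle_dec (p i) (1 - b/2)).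
  - pose proof (F_disp (b/2) (ts i) (p i) ltac:(lra) ltac:(lra) Ht). lra.
  - pose proof (F_ge (ts i) (p i) Hp ltac:(lra)). lra.
Qed.

Lemma up_closed_n b del p ts i n : PO b del p ts -> b <= p i -> b <= p (i + Z.of_nat n)%Z.
Proof.
  intros HP Hi. induction n.
  - rewrite Z.add_0_r. auto.
  - replace (i + Z.of_nat (S n))%Z with (i + Z.of_nat n + 1)%Z by lia.
    apply (up_closed b del p ts); auto.
Qed.

Lemma up_closed_le b del p ts i j : PO b del p ts -> (i <= j)%Z -> b <= p i -> b <= p j.
Proof.
  intros HP Hij Hi. replace j with (i + Z.of_nat (Z.to_nat (j - i)))%Z by lia.
  apply (up_closed_n b del p ts); auto.
Qed.

Lemma back_step b del p ts j : PO b del p ts -> (forall i, b <= p i) -> p j <= 1 - b ->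
  p (j - 1)%Z <= p j - b/16.
Proof.
  intros HP Hall Hj. pose proof HP as (Hb & Hd & _).
  destruct (PO_facts _ _ _ _ HP) as [Hdb Hf]. destruct (Hf (j-1)%Z) as (Hp & Ht & HF & _).
  replace (j - 1 + 1)%Z with j in HF by lia.
  pose proof (F_ge (ts (j-1)%Z) (p (j-1)%Z) Hp ltac:(lra)).
  pose proof (Hall (j-1)%Z).
  pose proof (F_disp (b/2) (ts (j-1)%Z) (p (j-1)%Z) ltac:(lra) ltac:(lra) Ht). lra.
Qed.

Lemma all_high b del p ts : PO b del p ts -> (forall i, b <= p i) -> forall i, 1 - b < p i.
Proof.
  intros HP Hall j. pose proof HP as (Hb & Hd & Hp & _).
  destruct (Rlt_dec (1 - b) (p j)) as [|Hn]; auto. exfalso.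
  assert (forall n, p (j - Z.of_nat n)%Z <= p j - INR n * (b/16)).
  { induction n.
    - rewrite Z.sub_0_r. simpl. lra.
    - replace (j - Z.of_nat (S n))%Z with ((j - Z.of_nat n) - 1)%Z by lia.
      rewrite S_INR.
      pose proof (Hall (j - Z.of_nat n)%Z).
      assert (Hle : p (j - Z.of_nat n)%Z <= 1 - b).
      { assert (0 <= INR n * (b/16)) by (apply Rmult_le_pos; [apply pos_INR|lra]). lra. }
      pose proof (back_step b del p ts (j - Z.of_nat n)%Z HP Hall Hle). lra. }
  destruct (archimed (16 / b)) as [Hup _].
  set (n := Z.to_nat (up (16 / b))).
  assert (INR n >= 16 / b).
  { unfold n. rewrite INR_IZR_INZ, Z2Nat.id. lra.
    apply le_IZR. assert (0 < 16 / b) by (apply Rdiv_lt_0_compat; lra). lra. }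
  specialize (H n). pose proof (Hall (j - Z.of_nat n)%Z).
  assert (INR n * (b / 16) >= 1).
  { apply Rle_ge. replace 1 with ((16 / b) * (b / 16)) by (field; lra).
    apply Rmult_le_compat_r; lra. }
  lra.
Qed.


Definition zz (ts p : Z -> R) (m i : Z) := F (Ssum ts i - Ssum ts m) (p m).

Definition Inv b del (p ts : Z -> R) m (n : nat) :=
  let i := (m + 1 + Z.of_nat n)%Z in
  (b <= p i <= 1 - b /\ b + INR n * (b/16) <= p i /\
     exists h, Rabs h <= (INR n + 1) * (4/b) * del /\ zz ts p m i = F h (p i))
  \/ (1 - b - del <= p i /\ 1 - b - del - b <= zz ts p m i).

Lemma hbound b del n : 0 < b <= 1/8 -> 0 < del <= b*b*b/100 ->
  b + INR n * (b/16) <= 1 -> (INR n + 2) * (4/b) * del <= b.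
Proof.
  intros Hb Hd Hn.
  assert (INR n <= 16 / b).
  { apply Rmult_le_reg_r with (b/16). lra.
    replace (16 / b * (b / 16)) with 1 by (field; lra). lra. }
  pose proof (pos_INR n).
  apply Rle_trans with ((16/b + 2) * (4/b) * (b*b*b/100)).
  { apply Rmult_le_compat. 
    - apply Rmult_le_pos; [lra|]. apply Rlt_le, Rdiv_lt_0_compat; lra.
    - lra.
    - apply Rmult_le_compat_r. apply Rlt_le, Rdiv_lt_0_compat; lra. lra.
    - lra. }
  replace ((16/b + 2) * (4/b) * (b*b*b/100)) with (b * ((64 + 8 * b)/100)) by (field; lra).
  assert ((64 + 8*b)/100 <= 1) by lra. nra.
Qed.

Lemma zz_range ts p m i : (forall k, 0 <= p k <= 1) -> 0 <= zz ts p m i <= 1.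
Proof. intros. unfold zz. apply F_range; auto. Qed.

Lemma zz_succ ts p m i : (forall k, 0 <= p k <= 1) ->
  zz ts p m (i+1)%Z = F (ts i) (zz ts p m i).
Proof.
  intros Hp. unfold zz. rewrite Ssum_succ, <- F_add by auto. f_equal. ring.
Qed.

Lemma inv_all b del p ts m : PO b del p ts -> p m < b -> b <= p (m+1)%Z ->
  forall n, Inv b del p ts m n.
Proof.
  intros HP Hm Hm1. pose proof HP as (Hb & Hd & Hp & Hts).
  destruct (PO_facts _ _ _ _ HP) as [Hdb Hf].
  induction n.
  - unfold Inv. simpl. rewrite Z.add_0_r.
    destruct (Hf m) as (_ & Ht & HF & HFr).
    assert (Hz : zz ts p m (m+1)%Z = F (ts m) (p m)).
    { rewrite zz_succ by auto. unfold zz. rewrite Rminus_diag, F_0. auto. }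
    rewrite Hz. pose proof (Hp (m+1)%Z).
    destruct (Rle_dec (p (m+1)%Z) (1 - b)).
    + left. split; [lra|]. split; [lra|].
      destruct (F_solve (b/2) (F (ts m) (p m)) (p (m+1)%Z) ltac:(lra) ltac:(lra) ltac:(lra)) as (g & Hg1 & Hg2).
      exists g. split; [|auto].
      apply Rle_trans with (2 * Rabs (F (ts m) (p m) - p (m + 1)%Z) / (b / 2)); auto.
      destruct (Hts m) as [_ Hab].
      replace (2 * Rabs (F (ts m) (p m) - p (m + 1)%Z) / (b / 2)) with
        (Rabs (F (ts m) (p m) - p (m + 1)%Z) * (4 / b)) by (field; lra).
      replace ((0 + 1) * (4 / b) * del) with (del * (4/b)) by ring.
      apply Rmult_le_compat_r; auto. apply Rlt_le, Rdiv_lt_0_compat; lra.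
    + right. lra.
  - unfold Inv in *. set (i := (m + 1 + Z.of_nat n)%Z) in *.
    replace (m + 1 + Z.of_nat (S n))%Z with (i + 1)%Z by (unfold i; lia).
    rewrite S_INR.
    destruct (Hf i) as (Hpi & Ht & HF & HFr). pose proof (Hp (i+1)%Z) as Hpi1.
    rewrite zz_succ by auto.
    pose proof (zz_range ts p m i Hp) as Hzr.
    destruct IHn as [(HA1 & HA2 & h & Hh & Hzh) | (HB1 & HB2)].
    + assert (Hhb : (INR n + 2) * (4/b) * del <= b) by (apply hbound; lra).
      assert (Habs : Rabs h <= b).
      { apply Rle_trans with ((INR n + 2) * (4/b) * del); auto.
        apply Rle_trans with ((INR n + 1) * (4/b) * del); auto.
        apply Rmult_le_compat_r; [lra|]. apply Rmult_le_compat_r.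
        apply Rlt_le, Rdiv_lt_0_compat; lra. lra. }
      rewrite Hzh, F_comm by auto.
      pose proof (F_disp (b/2) (ts i) (p i) ltac:(lra) ltac:(lra) Ht) as Hdisp.
      destruct (Rle_dec (p (i+1)%Z) (1 - b)).
      * left. split; [lra|]. split; [lra|].
        destruct (F_solve (b/2) (F (ts i) (p i)) (p (i+1)%Z) ltac:(lra) ltac:(lra) ltac:(lra)) as (g & Hg1 & Hg2).
        exists (h + g). split.
        -- eapply Rle_trans. apply Rabs_triang.
           assert (Rabs g <= (4/b) * del).
           { apply Rle_trans with (2 * Rabs (F (ts i) (p i) - p (i + 1)%Z) / (b / 2)); auto.
             destruct (Hts i) as [_ Hab].
             replace (2 * Rabs (F (ts i) (p i) - p (i + 1)%Z) / (b / 2)) with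
               (Rabs (F (ts i) (p i) - p (i + 1)%Z) * (4 / b)) by (field; lra).
             rewrite Rmult_comm. apply Rmult_le_compat_l; auto.
             apply Rlt_le, Rdiv_lt_0_compat; lra. }
           lra.
        -- rewrite <- Hg1, <- F_add by lra. reflexivity.
      * right. split; [lra|].
        pose proof (F_near h (F (ts i) (p i)) HFr ltac:(lra)).
        apply Rabs_le_inv in H. lra.
    + right. pose proof (F_ge (ts i) (zz ts p m i) Hzr ltac:(lra)).
      split; [|lra].
      destruct (Rle_dec (1 - b) (p i)).
      * pose proof (F_ge (ts i) (p i) Hpi ltac:(lra)). lra.
      * pose proof (F_disp (b/2) (ts i) (p i) ltac:(lra) ltac:(lra) Ht). lra.
Qed.


Lemma cross_case b del p ts m : PO b del p ts -> p m < b -> b <= p (m+1)%Z ->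
  forall i tau, 0 <= tau < ts i ->
    Rabs (F (Ssum ts i + tau) (F (- Ssum ts m) (p m)) - F tau (p i)) <= 3 * b.
Proof.
  intros HP Hm Hm1 i tau Htau. pose proof HP as (Hb & Hd & Hp & Hts).
  destruct (PO_facts _ _ _ _ HP) as [Hdb Hf].
  assert (Hts0 : forall k, 0 <= ts k) by (intros k; destruct (Hts k); lra).
  assert (Heq : F (Ssum ts i + tau) (F (- Ssum ts m) (p m)) = F tau (zz ts p m i)).
  { unfold zz. rewrite <- !F_add by auto. f_equal. ring. }
  rewrite Heq. pose proof (zz_range ts p m i Hp) as Hzr.
  destruct (Hf i) as (Hpi & Ht & HF & HFr).
  pose proof (F_range tau (p i) Hpi) as Hr1. pose proof (F_range tau _ Hzr) as Hr2.
  destruct (Z_lt_le_dec i m).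
  -
    assert (Hpi1 : p (i+1)%Z < b).
    { destruct (Rlt_dec (p (i+1)%Z) b); auto. exfalso.
      assert (b <= p m) by (apply (up_closed_le b del p ts (i+1)%Z m); auto; [lia|lra]). lra. }
    assert (F tau (p i) <= F (ts i) (p i)) by (apply F_mono_t; auto; lra).
    assert (F tau (zz ts p m i) <= p m).
    { unfold zz. rewrite <- F_add by auto.
      rewrite <- (F_0 (p m)) at 2. apply F_mono_t; auto.
      pose proof (Ssum_mono ts (i+1)%Z m Hts0 ltac:(lia)). rewrite Ssum_succ in H0. lra. }
    apply Rabs_le. lra.
  - destruct (Z.eq_dec i m).
    + subst. unfold zz. rewrite Rminus_diag, F_0. rewrite Rminus_diag, Rabs_R0. lra.
    + pose proof (inv_all b del p ts m HP Hm Hm1 (Z.to_nat (i - m - 1))) as HI.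
      unfold Inv in HI. replace (m + 1 + Z.of_nat (Z.to_nat (i - m - 1)))%Z with i in HI by lia.
      destruct HI as [(HA1 & HA2 & h & Hh & Hzh) | (HB1 & HB2)].
      * assert (Hhb : (INR (Z.to_nat (i - m - 1)) + 2) * (4/b) * del <= b) by (apply hbound; lra).
        assert (Habs : Rabs h <= b).
        { apply Rle_trans with ((INR (Z.to_nat (i - m - 1)) + 2) * (4/b) * del); auto.
          apply Rle_trans with ((INR (Z.to_nat (i - m - 1)) + 1) * (4/b) * del); auto.
          apply Rmult_le_compat_r; [lra|]. apply Rmult_le_compat_r.
          apply Rlt_le, Rdiv_lt_0_compat; lra. lra. }
        rewrite Hzh, F_comm by auto.
        pose proof (F_near h (F tau (p i)) Hr1 ltac:(lra)). lra.
      * pose proof (F_ge tau (p i) Hpi ltac:(lra)).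
        pose proof (F_ge tau (zz ts p m i) Hzr ltac:(lra)).
        apply Rabs_le. lra.
Qed.

Lemma shadow_real eps : 0 < eps -> exists del, 0 < del /\ forall (p ts : Z -> R),
  (forall i, 0 <= p i <= 1) ->
  (forall i, 1 <= ts i /\ Rabs (F (ts i) (p i) - p (i+1)%Z) <= del) ->
  exists x0, 0 <= x0 <= 1 /\ forall i tau, 0 <= tau < ts i ->
     Rabs (F (Ssum ts i + tau) x0 - F tau (p i)) <= eps.
Proof.
  intros He. set (e := Rmin eps (1/2)).
  assert (He1 : 0 < e <= eps /\ e <= 1/2) by (unfold e, Rmin; destruct (Rle_dec eps (1/2)); lra).
  set (b := e / 4). assert (Hbe : b = e / 4) by reflexivity. exists (b*b*b/100).
  assert (Hb : 0 < b <= 1/8) by (unfold b; lra).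
  split. { assert (0 < b*b*b) by (repeat apply Rmult_lt_0_compat; lra). lra. }
  intros p ts Hp Hts.
  assert (HP : PO b (b*b*b/100) p ts).
  { split; [auto|]. split; [|split; auto].
    assert (0 < b*b*b) by (repeat apply Rmult_lt_0_compat; lra). lra. }
  destruct (PO_facts _ _ _ _ HP) as [Hdb Hf].
  destruct (classic (forall i, p i < b)) as [Hlow | Hnl].
  - exists 0. split; [lra|]. intros i tau Htau. rewrite F_fix0.
    destruct (Hf i) as (Hpi & Ht & HF & HFr). pose proof (Hlow (i+1)%Z).
    pose proof (F_mono_t tau (ts i) (p i) Hpi ltac:(lra)). pose proof (F_range tau _ Hpi).
    apply Rabs_le. lra.
  - apply not_all_ex_not in Hnl. destruct Hnl as [j Hj]. apply Rnot_lt_le in Hj.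
    destruct (classic (forall i, b <= p i)) as [Hhigh | Hnh].
    + exists 1. split; [lra|]. intros i tau Htau. rewrite F_fix1.
      pose proof (all_high b _ p ts HP Hhigh i). destruct (Hf i) as (Hpi & _).
      pose proof (F_ge tau (p i) Hpi ltac:(lra)). pose proof (F_range tau _ Hpi).
      apply Rabs_le. lra.
    + apply not_all_ex_not in Hnh. destruct Hnh as [i0 Hi0]. apply Rnot_le_lt in Hi0.
      assert (Hij : (i0 < j)%Z).
      { destruct (Z_lt_le_dec i0 j); auto. exfalso.
        pose proof (up_closed_le b _ p ts j i0 HP l Hj). lra. }
      assert (Hc : exists m, p m < b /\ b <= p (m+1)%Z).
      { replace j with (i0 + Z.of_nat (Z.to_nat (j - i0)))%Z in Hj by lia.
        clear Hij. remember (Z.to_nat (j - i0)) as N eqn:HN. clear HN. revert i0 Hi0 Hj. induction N as [|n IH]; intros i0 Hi0 Hj.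
        - rewrite Z.add_0_r in Hj. lra.
        - destruct (Rlt_dec (p (i0+1)%Z) b).
          + apply (IH (i0+1)%Z); auto. replace (i0 + 1 + Z.of_nat n)%Z with (i0 + Z.of_nat (S n))%Z by lia. auto.
          + exists i0. split; auto. lra. }
      destruct Hc as (m & Hm & Hm1).
      exists (F (- Ssum ts m) (p m)). split. apply F_range; auto.
      intros i tau Htau. pose proof (cross_case b _ p ts m HP Hm Hm1 i tau Htau). unfold b in H. lra.
Qed.


Definition XX := {x : R | 0 <= x <= 1}.
Definition dX (x y : XX) : R := Rabs (proj1_sig x - proj1_sig y).
Definition phiX (t : R) (x : XX) : XX :=
  exist _ (F t (proj1_sig x)) (F_range t _ (proj2_sig x)).

Lemma XX_eq (x y : XX) : proj1_sig x = proj1_sig y -> x = y.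
Proof.
  destruct x as [x hx], y as [y hy]; simpl; intros ->.
  f_equal. apply proof_irrelevance.
Qed.

Lemma metric_X : is_metric dX.
Proof.
  unfold is_metric, dX. split; [intros; apply Rabs_pos|].
  split; [|split].
  - intros x y; split; intros H.
    + apply XX_eq. destruct (Req_dec (proj1_sig x) (proj1_sig y)); auto.
      exfalso. pose proof (Rabs_pos_lt (proj1_sig x - proj1_sig y)). lra.
    + subst. rewrite Rminus_diag, Rabs_R0. auto.
  - intros; apply Rabs_minus_sym.
  - intros x y z. replace (proj1_sig x - proj1_sig z) with
      ((proj1_sig x - proj1_sig y) + (proj1_sig y - proj1_sig z)) by ring.
    apply Rabs_triang.
Qed.

Lemma compact_X : mcompact dX.
Proof.
  intros Ix U HU Hcov.
  assert (Hi : forall y : R, exists i : Ix, forall (h : 0 <= y <= 1), U i (exist _ y h)).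
  { intros y. destruct (Rle_dec 0 y) as [r0|r0]; [destruct (Rle_dec y 1) as [r1|r1]|].
    - destruct (Hcov (exist _ y (conj r0 r1))) as [i Hi]. exists i. intros h.
      rewrite (proof_irrelevance _ h (conj r0 r1)). auto.
    - destruct (Hcov (exist _ 0 (conj (Rle_refl 0) Rle_0_1))) as [i _]. exists i. intros h; exfalso; apply r1; lra.
    - destruct (Hcov (exist _ 0 (conj (Rle_refl 0) Rle_0_1))) as [i _]. exists i. intros h; exfalso; apply r0; lra. }
  set (ix := fun y => proj1_sig (constructive_indefinite_description _ (Hi y))).
  assert (Hix : forall y h, U (ix y) (exist _ y h)).
  { intros y h. unfold ix. destruct (constructive_indefinite_description _ (Hi y)). simpl. auto. }
  set (fam := fun y z => exists r, 0 < r /\ forall w (hw : 0 <= w <= 1), Rabs (z - w) < r -> U (ix y) (exist _ w hw)).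
  set (f := mkfamily (fun _ => True) fam (fun _ _ => I)).
  assert (Hc : covering_open_set (fun c => 0 <= c <= 1) f).
  { split.
    - intros z hz. exists z. simpl. unfold fam.
      destruct (HU (ix z) (exist _ z hz) (Hix z hz)) as (r & Hr & Hball).
      exists r. split; [auto|]. intros w hw Hw. apply Hball. unfold dX. simpl. auto.
    - intros y z Hyz. simpl in Hyz. unfold fam in Hyz. destruct Hyz as (r & Hr & Hball).
      exists (mkposreal (r/2) ltac:(lra)). intros z' Hz'. unfold disc in Hz'. simpl in Hz'.
      exists (r/2). split; [lra|]. intros w hw Hw. apply Hball.
      replace (z - w) with ((z - z') + (z' - w)) by ring.
      eapply Rle_lt_trans. apply Rabs_triang. rewrite Rabs_minus_sym. lra. }
  destruct (compact_P3 0 1 f Hc) as (D & Hcov' & Hfin).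
  destruct Hfin as (l & Hl).
  exists (map ix l). intros [z hz].
  destruct (Hcov' z hz) as (y & Hfy & HDy).
  exists (ix y). split.
  - apply in_map. apply Hl. split; simpl; auto.
  - simpl in Hfy. destruct Hfy as (r & Hr & Hball). apply Hball.
    rewrite Rminus_diag, Rabs_R0. auto.
Qed.

Lemma F_cont t x eps : 0 <= x <= 1 -> 0 < eps -> exists del, 0 < del /\
  forall s y, 0 <= y <= 1 -> Rabs (s - t) < del -> Rabs (x - y) < del -> Rabs (F s y - F t x) < eps.
Proof.
  intros Hx He. set (K := exp t + exp (- t)).
  assert (HK : 0 < K) by (unfold K; pose proof (exp_pos t); pose proof (exp_pos (-t)); lra).
  exists (Rmin (1/2) (eps / (2 * (K + 1)))).
  assert (Hq : 0 < eps / (2 * (K + 1))) by (apply Rdiv_lt_0_compat; lra).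
  split. { unfold Rmin; destruct (Rle_dec (1/2) (eps / (2 * (K + 1)))); lra. }
  intros s y Hy Hs Hxy.
  assert (Hd1 : Rmin (1/2) (eps / (2 * (K + 1))) <= 1/2) by apply Rmin_l.
  assert (Hd2 : Rmin (1/2) (eps / (2 * (K + 1))) <= eps / (2 * (K + 1))) by apply Rmin_r.
  set (dl := Rmin (1/2) (eps / (2 * (K + 1)))) in *.
  assert (H1 : Rabs (F s y - F t y) <= Rabs (s - t) / 2).
  { replace s with ((s - t) + t) at 1 by ring. rewrite F_add by auto.
    apply F_near. apply F_range; auto. lra. }
  assert (H2 : Rabs (F t y - F t x) <= K * Rabs (y - x)).
  { rewrite F_diffx by auto.
    pose proof (Dn_pos t x Hx). pose proof (Dn_pos t y Hy). pose proof (exp_pos t).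
    pose proof (Dn_ge t x Hx). pose proof (Dn_ge t y Hy).
    unfold Rdiv. rewrite Rmult_assoc, (Rmult_comm (y - x)), <- Rmult_assoc.
    rewrite Rabs_mult. apply Rmult_le_compat_r. apply Rabs_pos.
    rewrite Rabs_pos_eq. 2:{ apply Rmult_le_pos; [lra|]. left; apply Rinv_0_lt_compat; nra. }
    assert (exp t * exp (-t) = 1) by (rewrite <- exp_plus; replace (t + -t) with 0 by ring; apply exp_0).
    pose proof (exp_pos (-t)).
    unfold Rmin in *. destruct (Rle_dec 1 (exp t)).
    - apply Rle_trans with (exp t * 1). apply Rmult_le_compat_l. lra.
      rewrite <- Rinv_1. apply Rinv_le_contravar; nra. unfold K; lra.
    - apply Rle_trans with (exp t * / (exp t * exp t)). apply Rmult_le_compat_l. lra.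
      apply Rinv_le_contravar; nra.
      replace (exp t * / (exp t * exp t)) with (/ exp t) by (field; lra). rewrite <- exp_Ropp.
      unfold K; lra. }
  replace (F s y - F t x) with ((F s y - F t y) + (F t y - F t x)) by ring.
  eapply Rle_lt_trans. apply Rabs_triang.
  rewrite Rabs_minus_sym in Hxy.
  assert (K * Rabs (y - x) <= K * dl) by (apply Rmult_le_compat_l; lra).
  assert (K * dl <= K * (eps / (2 * (K + 1)))) by (apply Rmult_le_compat_l; lra).
  assert (K * (eps / (2 * (K + 1))) < eps / 2).
  { replace (K * (eps / (2 * (K + 1)))) with ((eps / 2) * (K / (K + 1))) by (field; lra).
    assert (K / (K+1) < 1). { apply Rmult_lt_reg_r with (K+1). lra. field_simplify; lra. }
    nra. }
  assert (eps / (2 * (K + 1)) <= eps / 2).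
  { unfold Rdiv. apply Rmult_le_compat_l. lra. apply Rinv_le_contravar; lra. }
  lra.
Qed.


Lemma dist_le {X : Type} (d : X -> X -> R) (A : X -> Prop) z a :
  (forall x y, 0 <= d x y) -> A a -> Defs.dist d z A <= d z a.
Proof.
  intros Hd Ha. unfold Defs.dist.
  destruct (excluded_middle_informative (exists a, A a)) as [_|Hn].
  2:{ exfalso; apply Hn; exists a; auto. }
  destruct (Glb_Rbar_correct (fun r => exists a, A a /\ r = d z a)) as [Hlb Hglb].
  assert (H1 : Rbar_le (Glb_Rbar (fun r => exists a, A a /\ r = d z a)) (d z a)).
  { apply Hlb. exists a; auto. }
  assert (H2 : Rbar_le 0 (Glb_Rbar (fun r => exists a, A a /\ r = d z a))).
  { apply Hglb. intros r (a' & _ & ->). simpl. apply Hd. }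
  destruct (Glb_Rbar (fun r => exists a, A a /\ r = d z a)); simpl in *; try contradiction; auto.
Qed.

Definition pt0 : XX := exist _ 0 (conj (Rle_refl 0) Rle_0_1).
Definition pt1 : XX := exist _ 1 (conj Rle_0_1 (Rle_refl 1)).

Lemma Sing0 : Sing phiX pt0.
Proof. intros t. apply XX_eq. simpl. apply F_fix0. Qed.
Lemma Sing1 : Sing phiX pt1.
Proof. intros t. apply XX_eq. simpl. apply F_fix1. Qed.

Lemma dX_pos x y : 0 <= dX x y.
Proof. apply Rabs_pos. Qed.

Lemma flow_X : is_flow dX phiX.
Proof.
  split; [|split].
  - intros t x eps He. destruct (F_cont t (proj1_sig x) eps (proj2_sig x) He) as (del & Hd & H).
    exists del. split; auto. intros s y Hs Hxy. unfold dX in *. simpl. apply H; auto. apply (proj2_sig y).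
  - intros x. apply XX_eq. simpl. apply F_0.
  - intros t s x. apply XX_eq. simpl. apply F_add. apply (proj2_sig x).
Qed.

Lemma sing_or_interior (x : XX) :
  Sing phiX x \/ (0 < proj1_sig x < 1 /\ Defs.dist dX x (Sing phiX) <= Rmin (proj1_sig x) (1 - proj1_sig x)).
Proof.
  destruct x as [v hv]. simpl.
  destruct (Req_dec v 0) as [->|H0].
  - left. intros t. apply XX_eq. simpl. apply F_fix0.
  - destruct (Req_dec v 1) as [->|H1].
    + left. intros t. apply XX_eq. simpl. apply F_fix1.
    + right. split; [lra|].
      pose proof (dist_le dX (Sing phiX) (exist _ v hv) pt0 dX_pos Sing0).
      pose proof (dist_le dX (Sing phiX) (exist _ v hv) pt1 dX_pos Sing1).
      unfold dX in *; simpl in *. rewrite Rminus_0_r, Rabs_pos_eq in H by lra.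
      rewrite Rabs_left1 in H2 by lra. apply Rmin_glb; lra.
Qed.

Lemma sing_dist0 (x : XX) : Sing phiX x -> Defs.dist dX x (Sing phiX) <= 0.
Proof.
  intros Hs. pose proof (dist_le dX (Sing phiX) x x dX_pos Hs).
  unfold dX in H at 2. rewrite Rminus_diag, Rabs_R0 in H. auto.
Qed.

Lemma close_orbit (x y : XX) del : 0 < del <= 1/8 -> 0 < proj1_sig x < 1 ->
  dX x y <= del * Rmin (proj1_sig x) (1 - proj1_sig x) ->
  exists g, Rabs g <= 4 * del /\ phiX g x = y.
Proof.
  intros Hd Hx Hxy. destruct x as [a ha], y as [c hc]. unfold dX in Hxy. simpl in *.
  set (mm := Rmin a (1 - a)) in *.
  assert (Hm : 0 < mm /\ mm <= a /\ mm <= 1 - a) by (unfold mm, Rmin; destruct (Rle_dec a (1-a)); lra).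
  pose proof (Rabs_le_inv _ _ Hxy).
  assert (del * mm <= mm / 8) by nra.
  destruct (F_solve (mm/2) c a ltac:(lra) ltac:(lra) ltac:(lra)) as (g & Hg1 & Hg2).
  exists g. split.
  - eapply Rle_trans. apply Hg2. rewrite Rabs_minus_sym.
    apply Rle_trans with (2 * (del * mm) / (mm / 2)).
    + unfold Rdiv. apply Rmult_le_compat_r. left; apply Rinv_0_lt_compat; lra. lra.
    + right. field. lra.
  - apply XX_eq. simpl. auto.
Qed.

Lemma sing_equi_X : sing_equicontinuous dX phiX.
Proof.
  intros eps He. exists (Rmin (1/8) (eps/4)).
  assert (Hd : 0 < Rmin (1/8) (eps/4) <= 1/8 /\ Rmin (1/8) (eps/4) <= eps / 4)
    by (unfold Rmin; destruct (Rle_dec (1/8) (eps/4)); lra).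
  split; [lra|]. intros x y Hxy t.
  destruct (sing_or_interior x) as [Hs | (Hx & Hdist)].
  - pose proof (sing_dist0 x Hs).
    assert (dX x y <= 0) by nra. pose proof (dX_pos x y).
    assert (x = y) by (apply (proj1 (proj2 metric_X)); lra). subst.
    unfold dX. rewrite Rminus_diag, Rabs_R0. lra.
  - assert (Hxy' : dX x y <= Rmin (1/8) (eps/4) * Rmin (proj1_sig x) (1 - proj1_sig x)).
    { eapply Rle_trans. apply Hxy. apply Rmult_le_compat_l; lra. }
    destruct (close_orbit x y _ (proj1 Hd) Hx Hxy') as (g & Hg & <-).
    unfold dX, phiX. simpl. rewrite F_comm by apply (proj2_sig x).
    rewrite Rabs_minus_sym. eapply Rle_trans. apply F_near. apply F_range, (proj2_sig x). lra. lra.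
Qed.

Lemma sing_exp_X : sing_expansive dX phiX.
Proof.
  intros eps He. exists (Rmin (1/8) (eps/4)).
  assert (Hd : 0 < Rmin (1/8) (eps/4) <= 1/8 /\ Rmin (1/8) (eps/4) <= eps / 4)
    by (unfold Rmin; destruct (Rle_dec (1/8) (eps/4)); lra).
  split; [lra|]. intros x y s _ Hts. specialize (Hts 0).
  assert (H0 : phiX 0 x = x) by (apply XX_eq; simpl; apply F_0).
  rewrite H0 in Hts. exists 0.
  destruct (sing_or_interior x) as [Hs | (Hx & Hdist)].
  - pose proof (sing_dist0 x Hs).
    assert (dX x (phiX (s 0) y) <= 0) by nra. pose proof (dX_pos x (phiX (s 0) y)).
    assert (x = phiX (s 0) y) by (apply (proj1 (proj2 metric_X)); lra).
    exists 0. split; [lra|]. rewrite H0. auto.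
  - assert (Hxy' : dX x (phiX (s 0) y) <= Rmin (1/8) (eps/4) * Rmin (proj1_sig x) (1 - proj1_sig x)).
    { eapply Rle_trans. apply Hts. apply Rmult_le_compat_l; lra. }
    destruct (close_orbit x _ _ (proj1 Hd) Hx Hxy') as (g & Hg & Hgx).
    exists g. split. { apply Rabs_le_inv in Hg. lra. } auto.
Qed.

Lemma not_equi_X : ~ equicontinuous dX phiX.
Proof.
  intros Heq. destruct (Heq (1/4) ltac:(lra)) as (del & Hd & H).
  set (q := Rmin del (1/2)).
  assert (Hq : 0 < q <= 1/2 /\ q <= del) by (unfold q, Rmin; destruct (Rle_dec del (1/2)); lra).
  set (xq := exist (fun x => 0 <= x <= 1) q ltac:(lra) : XX).
  destruct (F_solve q (1/2) q ltac:(lra) ltac:(lra) ltac:(lra)) as (g & Hg & _).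
  assert (dX xq pt0 <= del) by (unfold dX; simpl; rewrite Rminus_0_r, Rabs_pos_eq; lra).
  specialize (H xq pt0 H0 g). unfold dX in H. simpl in H. rewrite Hg, F_fix0 in H.
  rewrite Rminus_0_r, Rabs_pos_eq in H; lra.
Qed.

Lemma shadow_X : shadowing dX phiX.
Proof.
  intros eps He. destruct (shadow_real eps He) as (del & Hd & H).
  exists del. split; auto. intros xs ts Hpo.
  destruct (H (fun i => proj1_sig (xs i)) ts (fun i => proj2_sig (xs i))) as (x0 & Hx0 & Hsh).
  { intros i. destruct (Hpo i) as [H1 H2]. split; auto. }
  exists (exist _ x0 Hx0), (fun t => t). split.
  - split.
    + split; [auto|]. split.
      * intros t. apply derivable_continuous_pt. apply derivable_pt_id.
      * exists (fun t => t). split; [auto|]. split; [auto|].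
        intros t. apply derivable_continuous_pt. apply derivable_pt_id.
    + intros t r Htr. replace ((t - r) / (t - r) - 1) with 0 by (field; lra).
      rewrite Rabs_R0. lra.
  - intros i t Ht. unfold dX, phiX. simpl.
    rewrite Ssum_succ in Ht.
    replace t with (Ssum ts i + (t - Ssum ts i)) at 1 by ring.
    apply Hsh. lra.
Qed.

Theorem mainTheorem10 :
  exists (X : Type) (d : X -> X -> R) (phi : R -> X -> X),
    is_metric d /\ mcompact d /\ is_flow d phi /\
    shadowing d phi /\ sing_expansive d phi /\ sing_equicontinuous d phi /\
    ~ equicontinuous d phi.
Proof.
  exists XX, dX, phiX.
  split; [apply metric_X|]. split; [apply compact_X|]. split; [apply flow_X|].
  split; [apply shadow_X|]. split; [apply sing_exp_X|]. split; [apply sing_equi_X|].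
  apply not_equi_X.
Qed.
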